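(* Let $c>0$, $0<\lambda\le T_M$, and let $f\in C^2(\mathbb R)$ solve $$f''(y)-cf'(y)-f^4(y)=-\int_{-\infty}^\infty E(y-\eta)f^4(\eta)\,d\eta\ (y\in\mathbb R),\qquad 0<\lambda\le f\le T_M.$$ Then $f$ does not attain its supremum nor its infimum over $\mathbb R$ at any point of $\mathbb R$, unless $f$ is constant.
   Context: $E(x)=\frac12\int_{|x|}^\infty\frac{e^{-t}}{t}dt$, which satisfies $\int_{\mathbb R}E=1$. *)

(* Defs.v *)
From HB Require Import structures.
From mathcomp Require Import all_boot all_order all_algebra.
From mathcomp Require Import all_classical all_reals all_analysis.
Set Implicit Arguments. Unset Strict Implicit. Unset Printing Implicit Defensive.
Import Order.TTheory GRing.Theory Num.Theory.
Import numFieldNormedType.Exports.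
Local Open Scope classical_set_scope.
Local Open Scope ring_scope.

(* E(x) = 1/2 * int_{|x|}^oo e^{-t}/t dt, an extended nonnegative real
   (E(0) = +oo). *)
Definition E (R : realType) (x : R) : \bar R :=
  ((2 : R)^-1)%:E *
  (\int[@lebesgue_measure R]_(t in [set t : R | (`|x| <= t)%R]) (expR (- t) / t)%R%:E)%E.

Definition C2 (R : realType) (f : R -> R) : Prop :=
  (forall x, derivable f x 1) /\ (forall x, derivable (derive1 f) x 1) /\
  continuous (derive1n 2 f).

Definition Econv (R : realType) (f : R -> R) (y : R) : \bar R :=
  (\int[@lebesgue_measure R]_(eta in [set: R]) (E (y - eta)%R * (f eta ^+ 4)%R%:E))%E.

(* Main.v *)
Require Import Defs.
From HB Require Import structures.
From mathcomp Require Import all_boot all_order all_algebra.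
From mathcomp Require Import all_classical all_reals all_analysis.
From mathcomp Require Import measurable_realfun.
From mathcomp Require Import ring lra.
Import Order.TTheory GRing.Theory Num.Theory.
Import numFieldNormedType.Exports.
Local Open Scope classical_set_scope.
Local Open Scope ring_scope.

Section S.
Variable R : realType.
Notation mu := (@lebesgue_measure R).

Definition gt (t : R) : R := ((fun t : R => expR (- t) / t) \_ `]0, +oo[) t.

Lemma gtE t : 0 <= t -> gt t = expR (- t) / t.
Proof.
rewrite le_eqVlt => /orP[/eqP <-|t0].
  by rewrite /gt patchE ifF ?invr0 ?mulr0 // memNset //= in_itv /= ltxx.
by rewrite /gt patchE ifT // inE /= in_itv /= t0.
Qed.

Lemma gt_ge0 t : 0 <= gt t.
Proof.
rewrite /gt patchE; case: ifPn => // /[!inE] /=; rewrite in_itv /= andbT => t0.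
by rewrite divr_ge0 ?expR_ge0 ?ltW.
Qed.

Lemma measurable_gt : measurable_fun setT gt.
Proof.
apply/measurable_restrict => //; rewrite setTI.
apply: open_continuous_measurable_fun; first exact: interval_open.
move=> x; rewrite inE /= in_itv /= andbT => x0.
apply: (@continuousM _ R^o (fun t : R => expR (- t)) GRing.inv).
  apply: continuous_comp; last exact: continuous_expR.
  exact: continuousN.
by apply: inv_continuous; rewrite gt_eqF.
Qed.


Definition Aset (y0 : R) : set (R * R) := [set p | `|y0 - p.1| <= p.2].

Definition F (y0 : R) (p : R * R) : \bar R := (\1_(Aset y0) p * gt p.2)%:E.

Lemma measurable_Aset y0 : measurable (Aset y0).
Proof.
have mh : measurable_fun setT (fun p : R * R => `|y0 - p.1| - p.2).
  apply: measurable_funB; last exact: measurable_snd.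
  apply: measurableT_comp; first exact: normr_measurable.
  by apply: measurable_funB => //; exact: measurable_fst.
have := mh measurableT `]-oo, 0]%classic (measurable_itv _).
rewrite setTI; congr measurable; apply/seteqP; split => p /=.
  by rewrite in_itv /= subr_le0.
by rewrite in_itv /= subr_le0.
Qed.


Lemma measurable_F y0 : measurable_fun setT (F y0).
Proof.
apply/measurable_EFinP; apply: measurable_funM.
  by apply: measurable_indic; exact: measurable_Aset.
apply: measurableT_comp; first exact: measurable_gt.
exact: measurable_snd.
Qed.

Lemma F_ge0 y0 p : (0 <= F y0 p)%E.
Proof. by rewrite lee_fin mulr_ge0 ?gt_ge0. Qed.

Lemma EE (y0 eta : R) : E (y0 - eta) = (((2:R)^-1)%:E * fubini_F mu (F y0) eta)%E.
Proof.
rewrite /E integral_mkcond /fubini_F; congr (_ * _)%E.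
apply: eq_integral => t _; rewrite patchE /F indicE /Aset.
case: ifPn => [/[!inE] /= H|].
  rewrite (_ : (eta, t) \in _) ?mul1r ?gtE //; last by rewrite ?inE.
  exact: le_trans H.
move=> H; rewrite (_ : (eta, t) \in _ = false) ?mul0r //.
by apply/negbTE; apply: contra H => /[!inE] /= H; rewrite ?inE.
Qed.


Definition hG (t : R) : R := if 0 < t then 2 * expR (- t) else 0.

Lemma GE y0 t : fubini_G mu (F y0) t = (hG t)%:E.
Proof.
rewrite /fubini_G /hG /F /=; case: ifPn => t0; last first.
  have -> : gt t = 0.
    rewrite /gt patchE ifF //; apply/negbTE.
    by rewrite notin_setE /= in_itv /= andbT; apply/negP.
  under eq_integral do rewrite mulr0.
  exact: integral0.
transitivity (\int[mu]_x ((gt t)%:E * (\1_(`[y0 - t, y0 + t]%classic) x)%:E))%E.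
  apply: eq_integral => x _; rewrite -EFinM mulrC; congr (_ * _)%:E.
  rewrite !indicE /Aset; congr (GRing.natmul _ (nat_of_bool _)).
  by apply/idP/idP; rewrite !inE /= in_itv /= distrC ler_distl.
rewrite ge0_integralZl_EFin //; last 2 first.
  by apply/measurable_EFinP; apply: measurable_indic.
  exact: gt_ge0.
rewrite integral_indic // setIT.
set m := (X in (_ * X)%E).
have -> : m = ((2 * t)%:E : \bar R).
  rewrite /m; apply: eq_trans (lebesgue_measure_itv _) _ => /=.
  rewrite lte_fin ltrD2l (_ : - t < t); last by rewrite -subr_gt0 opprK addr_gt0.
  by rewrite -EFinD; congr (_%:E); lra.
rewrite -EFinM gtE ?ltW //; congr (_%:E).
field; lra.
Qed.


Lemma int_hG : (\int[mu]_t (hG t)%:E = 2%:E)%E.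
Proof.
have mf : measurable_fun setT (fun t : R => (2 * expR (- t))%:E).
  apply/measurable_EFinP; apply: measurable_funM => //.
  apply: measurableT_comp; first exact: measurable_expR.
  exact: measurable_funN.
transitivity (\int[mu]_(t in `]0%R, +oo[%classic) (2 * expR (- t))%:E)%E.
  rewrite [RHS]integral_mkcond; apply: eq_integral => t _.
  rewrite patchE /hG (_ : (t \in _) = (0 < t)); last by rewrite mem_setE /= in_itv /= andbT.
  by case: ifPn.
rewrite integral_itv_obnd_cbnd; last exact: measurable_funTS.
transitivity (\int[mu]_t (2 * exponential_pdf 1 t)%:E)%E.
  rewrite integral_mkcond; apply: eq_integral => t _.
  rewrite patchE; case: ifPn => [/[!inE] /=|].
    by rewrite in_itv /= andbT => t0; rewrite exponential_pdfE // !mul1r mulN1r.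
  rewrite notin_setE /= in_itv /= andbT => /negP; rewrite -ltNge => t0.
  by rewrite lt0_exponential_pdf // mulr0.
under eq_integral do rewrite EFinM.
rewrite ge0_integralZl_EFin //.
- by rewrite integral_exponential_pdf // mule1.
- by move=> t _; rewrite lee_fin exponential_pdf_ge0.
- by apply/measurable_EFinP; exact: measurable_exponential_pdf.
Qed.


Lemma measurable_E (y0 : R) : measurable_fun setT (fun eta : R => E (y0 - eta)).
Proof.
rewrite (_ : (fun eta => _) = (fun eta => ((2:R)^-1)%:E * fubini_F mu (F y0) eta)%E); last first.
  by apply/funext => eta; rewrite EE.
apply: emeasurable_funM => //.
apply: measurable_fun_fubini_tonelli_F; [exact: measurable_F | exact: F_ge0].
Qed.

Lemma E_ge0 (x : R) : (0 <= E x)%E.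
Proof.
rewrite /E mule_ge0 // ?lee_fin ?invr_ge0 //; apply: integral_ge0 => t /= H.
by rewrite lee_fin divr_ge0 ?expR_ge0 // (le_trans _ H).
Qed.

Lemma int_E (y0 : R) : (\int[mu]_eta E (y0 - eta) = 1)%E.
Proof.
under eq_integral do rewrite (@EE y0).
rewrite ge0_integralZl_EFin //; last 2 first.
  by move=> x _; apply: integral_ge0 => t _; exact: F_ge0.
  apply: measurable_fun_fubini_tonelli_F; [exact: measurable_F | exact: F_ge0].
rewrite /fubini_F fubini_tonelli; last 2 first.
  exact: measurable_F.
  exact: F_ge0.
under eq_integral do rewrite -/(fubini_G mu (F y0) _) GE.
by rewrite int_hG -EFinM mulVf.
Qed.


Lemma E_lb (x K : R) : 0 < K -> `|x| <= K ->
  (((2:R)^-1 * (expR (- (K + 1)) / (K + 1)))%:E <= E x)%E.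
Proof.
move=> K0 xK.
set k := expR (- (K + 1)) / (K + 1).
rewrite /E EFinM; apply: lee_wpmul2l; first by rewrite lee_fin invr_ge0.
have BE : [set t : R | `|x| <= t] = `[`|x|, +oo[%classic.
  by apply/seteqP; split => t /=; rewrite in_itv /= andbT.
have mB : measurable [set t : R | `|x| <= t] by rewrite BE; exact: measurable_itv.
have mf : measurable_fun [set t : R | `|x| <= t] (fun t => (expR (- t) / t)%:E).
  apply: (eq_measurable_fun (EFin \o gt)).
    by move=> t /[!inE] /= H; rewrite gtE // (le_trans _ H).
  apply/measurable_EFinP; apply: measurable_funTS; exact: measurable_gt.
have sub : `[K, K + 1]%classic `<=` [set t : R | `|x| <= t].
  by move=> t /=; rewrite in_itv /= => /andP[Kt _]; exact: le_trans Kt.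
have f0 : forall t, [set t : R | `|x| <= t] t -> (0 <= (expR (- t) / t)%:E)%E.
  by move=> t /= H; rewrite lee_fin divr_ge0 ?expR_ge0 // (le_trans _ H).
have := ge0_subset_integral mu (measurable_itv `[K, K + 1]) mB mf f0 sub.
move=> H; apply: (le_trans _ H).
have -> : (k%:E = \int[mu]_(t in `[K, (K + 1)%R]%classic) (cst k%:E) t)%E.
  rewrite integral_cst //.
  set m := (X in (_ * X)%E).
  have -> : m = 1%E.
    rewrite /m; apply: eq_trans (lebesgue_measure_itv _) _ => /=.
    rewrite lte_fin ltrDl ltr01 -EFinD; congr (_%:E); lra.
  by rewrite mule1.
apply: ge0_le_integral => //.
- by move=> t _; rewrite lee_fin /k divr_ge0 ?expR_ge0 // addr_ge0 // ltW.
- exact: measurable_funS mf.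
- move=> t /=; rewrite in_itv /= => /andP[Kt tK].
  have t0 : 0 < t by exact: lt_le_trans Kt.
  rewrite lee_fin /k; apply: ler_pM.
  + exact: expR_ge0.
  + by rewrite invr_ge0 addr_ge0 // ltW.
  + by rewrite ler_expR lerN2.
  + by rewrite lef_pV2 // posrE // addr_gt0.
Qed.


Lemma calc_max (f : R -> R) (y0 : R) :
  (forall x, derivable f x 1) -> (forall x, derivable (derive1 f) x 1) ->
  {for y0, continuous (derive1 (derive1 f))} ->
  derive1 f y0 = 0 -> 0 < derive1 (derive1 f) y0 -> exists y, f y0 < f y.
Proof.
move=> d1 d2 cont f10 f2pos.
have H := @cvgr_gt _ _ _ _ (derive1 (derive1 f)) _ cont 0 f2pos.
have [d /= d0 Hd] := iffLR (nbhs_ballP _ _) (H _).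
exists (y0 + d / 2).
have yy : y0 < y0 + d / 2 by rewrite ltrDl divr_gt0.
have pos2 : forall x, x \in `]y0, y0 + d / 2[ -> 0 < derive1 (derive1 f) x.
  move=> x; rewrite in_itv /= => /andP[a b]; apply: Hd.
  by rewrite /ball /= distrC ger0_norm; lra.
have inc1 := gtr0_derive1_incr (fun x _ => d2 x) pos2
  (derivable_within_continuous (fun x _ => d2 x)).
have pos1 : forall x, x \in `]y0, y0 + d / 2[ -> 0 < derive1 f x.
  move=> x; rewrite in_itv /= => /andP[a b]; rewrite -f10.
  by apply: inc1 => //; exact: ltW.
exact: (gtr0_derive1_incr (fun x _ => d1 x) pos1
  (derivable_within_continuous (fun x _ => d1 x))) (lexx _) yy (lexx _).
Qed.

Lemma calc_min (f : R -> R) (y0 : R) :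
  (forall x, derivable f x 1) -> (forall x, derivable (derive1 f) x 1) ->
  {for y0, continuous (derive1 (derive1 f))} ->
  derive1 f y0 = 0 -> derive1 (derive1 f) y0 < 0 -> exists y, f y < f y0.
Proof.
move=> d1 d2 cont f10 f2neg.
have H := @cvgr_lt _ _ _ _ (derive1 (derive1 f)) _ cont 0 f2neg.
have [d /= d0 Hd] := iffLR (nbhs_ballP _ _) (H _).
exists (y0 + d / 2).
have yy : y0 < y0 + d / 2 by rewrite ltrDl divr_gt0.
have neg2 : forall x, x \in `]y0, y0 + d / 2[ -> derive1 (derive1 f) x < 0.
  move=> x; rewrite in_itv /= => /andP[a b]; apply: Hd.
  by rewrite /ball /= distrC ger0_norm; lra.
have dec1 := ltr0_derive1_decr (fun x _ => d2 x) neg2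
  (derivable_within_continuous (fun x _ => d2 x)).
have neg1 : forall x, x \in `]y0, y0 + d / 2[ -> derive1 f x < 0.
  move=> x; rewrite in_itv /= => /andP[a b]; rewrite -f10.
  by apply: dec1 => //; exact: ltW.
exact: (ltr0_derive1_decr (fun x _ => d1 x) neg1
  (derivable_within_continuous (fun x _ => d1 x))) (lexx _) yy (lexx _).
Qed.


Lemma me (y0 : R) (v : R -> R) : measurable_fun setT v ->
  measurable_fun setT (fun eta : R => (E (y0 - eta) * (v eta)%:E)%E).
Proof.
move=> mv; apply: emeasurable_funM; first exact: measurable_E.
exact/measurable_EFinP.
Qed.

Lemma H1 (y0 c : R) : 0 <= c -> (\int[mu]_eta (E (y0 - eta) * c%:E) = c%:E)%E.
Proof.
move=> c0; under eq_integral do rewrite muleC.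
rewrite ge0_integralZl_EFin //; last 2 first.
  by move=> x _; exact: E_ge0.
  exact: measurable_E.
by rewrite int_E mule1.
Qed.

Lemma H2 (y0 b k : R) (B : set R) : measurable B -> 0 <= b -> 0 <= k ->
  (forall eta, B eta -> (k%:E <= E (y0 - eta))%E) ->
  ((k * b)%:E * (@lebesgue_measure R) B <= \int[mu]_eta (E (y0 - eta) * (b * \1_B eta)%:E))%E.
Proof.
move=> mB b0 k0 HB.
have -> : ((k * b)%:E * mu B = \int[mu]_eta ((k * b)%:E * (\1_B eta)%:E))%E.
  rewrite ge0_integralZl_EFin //.
  - by rewrite integral_indic // setIT.
  - by apply/measurable_EFinP; exact: measurable_indic.
  - exact: mulr_ge0.
apply: ge0_le_integral => //.
- by move=> x _; rewrite -EFinM lee_fin mulr_ge0 // mulr_ge0.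
- by apply/measurable_EFinP; apply: measurable_funM => //; exact: measurable_indic.
- apply: me; apply: measurable_funM => //; exact: measurable_indic.
- move=> x _; have [xB|xB] := boolP (x \in B).
    have -> : \1_B x = 1 :> R by rewrite indicE xB.
    rewrite !mulr1 EFinM mule1; apply: lee_wpmul2r; first by rewrite lee_fin.
    by apply: HB; rewrite inE in xB.
  have -> : \1_B x = 0 :> R by rewrite indicE (negbTE xB).
  by rewrite !mulr0 !mule0.
Qed.

Lemma H3 (y0 : R) (v w : R -> R) : measurable_fun setT v -> measurable_fun setT w ->
  (forall x, 0 <= v x) -> (forall x, 0 <= w x) ->
  (\int[mu]_eta (E (y0 - eta) * (v eta + w eta)%:E) =
   \int[mu]_eta (E (y0 - eta) * (v eta)%:E) + \int[mu]_eta (E (y0 - eta) * (w eta)%:E))%E.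
Proof.
move=> mv mw v0 w0.
rewrite -ge0_integralD //; last 4 first.
- by move=> x _; rewrite mule_ge0 ?E_ge0 ?lee_fin.
- exact: me.
- by move=> x _; rewrite mule_ge0 ?E_ge0 ?lee_fin.
- exact: me.
by apply: eq_integral => x _; rewrite EFinD ge0_muleDr // lee_fin.
Qed.


Lemma pow4_le (x y : R) : 0 <= x -> x <= y -> x ^+ 4 <= y ^+ 4.
Proof.
move=> x0; rewrite le_eqVlt => /orP[/eqP->//|xy].
by rewrite ltW // ltrXn2r.
Qed.

Lemma mu_ball (z d : R) : 0 < d -> mu `]z - d, z + d[%classic = (2 * d)%:E.
Proof.
move=> d0; apply: eq_trans (lebesgue_measure_itv _) _ => /=.
rewrite lte_fin (_ : z - d < z + d); last by lra.
by rewrite -EFinD; congr (_%:E); lra.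
Qed.

Lemma lbE (y0 z d : R) : 0 < d -> exists2 k : R, 0 < k &
  forall eta, `]z - d, z + d[%classic eta -> (k%:E <= E (y0 - eta))%E.
Proof.
move=> d0; set K := `|y0 - z| + d.
have K0 : 0 < K by rewrite /K ltr_wpDl.
exists ((2:R)^-1 * (expR (- (K + 1)) / (K + 1))).
  by rewrite mulr_gt0 ?invr_gt0 // divr_gt0 ?expR_gt0 // addr_gt0.
move=> eta /=; rewrite in_itv /= => /andP[a b].
apply: E_lb => //; apply: le_trans (ler_distD z _ _) _.
rewrite /K lerD2l ltW // distrC ltr_distl; apply/andP; split; lra.
Qed.

End S.

Theorem lemma3p1 (R : realType) (c lambda T_M : R) (f : R -> R) :
  0 < c -> 0 < lambda -> lambda <= T_M ->
  C2 f ->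
  (forall y : R, ((derive1n 2 f y - c * derive1 f y - f y ^+ 4)%:E = - Econv f y)%E) ->
  (forall y : R, lambda <= f y <= T_M) ->
  ((exists y0 : R, forall y : R, f y <= f y0) \/
   (exists y0 : R, forall y : R, f y0 <= f y)) ->
  forall x y : R, f x = f y.
Proof.
move=> c0 l0 lT [d1 [d2 cont]] heq bnd ext.
have fc : continuous f.
  by move=> x; apply: differentiable_continuous; apply/derivable1_diffP.
have fpos : forall y, 0 < f y.
  by move=> y; have /andP[+ _] := bnd y; exact: lt_le_trans.
have mf4 : measurable_fun setT (fun x => f x ^+ 4).
  by apply: measurable_funX; exact: continuous_measurable_fun.
suff [y0 Hy0] : exists y0, forall z, f z = f y0 by move=> x y; rewrite !Hy0.
case: ext => [[y0 Hm]|[y0 Hm]]; exists y0 => z.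
- have [//|Hne] := eqVneq (f z) (f y0); exfalso.
  have fz : f z < f y0 by rewrite lt_neqAle Hne Hm.
  have f1 : derive1 f y0 = 0.
    have H : is_derive y0 1 f 0.
      apply: (@derive1_at_max _ f (y0 - 1) (y0 + 1)).
      + lra.
      + by move=> t _; exact: d1.
      + rewrite in_itv /=; apply/andP; split; lra.
      + by move=> t _; exact: Hm.
    by rewrite derive1E; exact: (@derive_val _ _ _ _ _ _ _ H).
  set mp := (f z + f y0) / 2.
  have fzmp : f z < mp.
    rewrite /mp; lra.
  have Hc := @cvgr_lt _ _ _ _ f _ (fc z) mp fzmp.
  have [d /= d0 Hd] := iffLR (nbhs_ballP _ _) (Hc _).
  set B := `]z - d, z + d[%classic.
  have HB : forall eta, B eta -> f eta < mp.
    move=> eta; rewrite /B /= in_itv /= => /andP[a b]; apply: Hd.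
    rewrite /ball /= ltr_distl; apply/andP; split; lra.
  have [k k0 Hk] := @lbE _ y0 z d d0.
  set dd := f y0 ^+ 4 - mp ^+ 4.
  have mpM : mp < f y0 by rewrite /mp; lra.
  have mp0 : 0 < mp by have := fpos z; rewrite /mp; lra.
  have dd0 : 0 < dd by rewrite /dd subr_gt0 ltrXn2r // ltW.
  have mB : measurable B by exact: measurable_itv.
  have ineq : (Econv f y0 + (k * dd)%:E * (@lebesgue_measure R) B <= (f y0 ^+ 4)%:E)%E.
    rewrite /Econv -(@H1 _ y0 (f y0 ^+ 4)); last by rewrite exprn_ge0 // ltW.
    apply: le_trans (leeD2l _ (@H2 _ y0 dd k B mB (ltW dd0) (ltW k0) Hk)) _.
    rewrite -H3 //; last 3 first.
    - apply: measurable_funM => //; exact: measurable_indic.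
    - by move=> x; rewrite exprn_ge0 // ltW.
    - by move=> x; rewrite mulr_ge0 // ltW.
    apply: ge0_le_integral => //.
    - by move=> x _; rewrite mule_ge0 ?E_ge0 // lee_fin addr_ge0 ?exprn_ge0 ?mulr_ge0 // ltW.
    - by apply: me; apply: measurable_funD => //; apply: measurable_funM => //; exact: measurable_indic.
    - by apply: me; exact: measurable_cst.
    move=> x _; apply: lee_wpmul2l; first exact: E_ge0.
    rewrite lee_fin indicE; have [xB|xB] := boolP (x \in B).
      rewrite mulr1 /dd addrC -lerBrDl opprB addrC subrK.
      by apply: pow4_le; [exact: ltW|]; apply: ltW; apply: HB; rewrite inE in xB.
    by rewrite mulr0 addr0; apply: pow4_le; [exact: ltW|exact: Hm].
  have EC : Econv f y0 = (f y0 ^+ 4 - derive1n 2 f y0)%:E.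
    have := heq y0; rewrite f1 mulr0 subr0 => E1.
    by rewrite -[Econv f y0]oppeK -E1 -EFinN opprB.
  rewrite EC mu_ball // -!EFinM -EFinD lee_fin in ineq.
  have f2 : 0 < derive1 (derive1 f) y0.
    have : 0 < k * dd * (2 * d) by rewrite !mulr_gt0.
    change (derive1n 2 f y0) with (derive1 (derive1 f) y0) in ineq; lra.
  have [y Hy] := @calc_max _ _ _ d1 d2 (cont y0) f1 f2.
  by have := Hm y; rewrite leNgt Hy.
- have [//|Hne] := eqVneq (f z) (f y0); exfalso.
  have fz : f y0 < f z by rewrite lt_neqAle eq_sym Hne Hm.
  have f1 : derive1 f y0 = 0.
    have H : is_derive y0 1 f 0.
      apply: (@derive1_at_min _ f (y0 - 1) (y0 + 1)).
      + lra.
      + by move=> t _; exact: d1.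
      + rewrite in_itv /=; apply/andP; split; lra.
      + by move=> t _; exact: Hm.
    by rewrite derive1E; exact: (@derive_val _ _ _ _ _ _ _ H).
  set mp := (f z + f y0) / 2.
  have fzmp : mp < f z by rewrite /mp; lra.
  have Hc := @cvgr_gt _ _ _ _ f _ (fc z) mp fzmp.
  have [d /= d0 Hd] := iffLR (nbhs_ballP _ _) (Hc _).
  set B := `]z - d, z + d[%classic.
  have HB : forall eta, B eta -> mp < f eta.
    move=> eta; rewrite /B /= in_itv /= => /andP[a b]; apply: Hd.
    rewrite /ball /= ltr_distl; apply/andP; split; lra.
  have [k k0 Hk] := @lbE _ y0 z d d0.
  set dd := mp ^+ 4 - f y0 ^+ 4.
  have m0 : 0 < f y0 by exact: fpos.
  have mpM : f y0 < mp by rewrite /mp; lra.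
  have dd0 : 0 < dd by rewrite /dd subr_gt0 ltrXn2r // ltW.
  have mB : measurable B by exact: measurable_itv.
  have ineq : ((f y0 ^+ 4)%:E + (k * dd)%:E * (@lebesgue_measure R) B <= Econv f y0)%E.
    rewrite /Econv -(@H1 _ y0 (f y0 ^+ 4)); last by rewrite exprn_ge0 // ltW.
    apply: le_trans (leeD2l _ (@H2 _ y0 dd k B mB (ltW dd0) (ltW k0) Hk)) _.
    rewrite -H3 //; last 3 first.
    - apply: measurable_funM => //; exact: measurable_indic.
    - by move=> x; rewrite exprn_ge0 // ltW.
    - by move=> x; rewrite mulr_ge0 // ltW.
    apply: ge0_le_integral => //.
    - by move=> x _; rewrite mule_ge0 ?E_ge0 // lee_fin addr_ge0 ?exprn_ge0 ?mulr_ge0 // ltW.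
    - by apply: me; apply: measurable_funD => //; apply: measurable_funM => //; exact: measurable_indic.
    - exact: me.
    move=> x _; apply: lee_wpmul2l; first exact: E_ge0.
    rewrite lee_fin indicE; have [xB|xB] := boolP (x \in B).
      rewrite mulr1 /dd addrC subrK.
      apply: pow4_le; first by rewrite /mp; have := fpos z; lra.
      by apply: ltW; apply: HB; rewrite inE in xB.
    by rewrite mulr0 addr0; apply: pow4_le; [exact: ltW|exact: Hm].
  have EC : Econv f y0 = (f y0 ^+ 4 - derive1n 2 f y0)%:E.
    have := heq y0; rewrite f1 mulr0 subr0 => E1.
    by rewrite -[Econv f y0]oppeK -E1 -EFinN opprB.
  rewrite EC mu_ball // -!EFinM -EFinD lee_fin in ineq.
  have f2 : derive1 (derive1 f) y0 < 0.
    have : 0 < k * dd * (2 * d) by rewrite !mulr_gt0.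
    change (derive1n 2 f y0) with (derive1 (derive1 f) y0) in ineq; lra.
  have [y Hy] := @calc_min _ _ _ d1 d2 (cont y0) f1 f2.
  by have := Hm y; rewrite leNgt Hy.
Qed.
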